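(* Let $u,v,w$ be three pairwise non-adjacent vertices in a $\{P_5,\overline{P_5}\}$-free graph $G$, and suppose $w$ is mixed on a set $A\subseteq N(u)\cap N(v)$ with $G[A]$ anticonnected. Then no vertex $z\in N(w)\setminus(A\cup\{u,v\})$ is mixed on $\{u,v\}$.
   Context: All graphs are finite and simple. $N(x)$ is the set of neighbors of $x$. $P_5$ is the path on five vertices, $\overline{P_5}$ its complement; $G$ is $\mathcal F$-free if it has no induced subgraph isomorphic to a member of $\mathcal F$. A graph is anticonnected if its complement is connected. A vertex $b\notin X$ is mixed on $X$ if it has both a neighbor and a non-neighbor in $X$. *)

(* Defs.v *)
From mathcomp Require Import all_boot.
Set Implicit Arguments. Unset Strict Implicit. Unset Printing Implicit Defensive.

Definition simple_graph (T : finType) (e : rel T) : Prop :=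
  symmetric e /\ irreflexive e.

Definition has_induced (T : finType) (e : rel T) (n : nat) (H : rel 'I_n) : Prop :=
  exists f : 'I_n -> T, injective f /\ forall i j, e (f i) (f j) = H i j.

Definition P5 : rel 'I_5 := fun i j => (i.+1 == j :> nat) || (j.+1 == i :> nat).
Definition coP5 : rel 'I_5 := fun i j => (i != j) && ~~ P5 i j.

Definition P5_coP5_free (T : finType) (e : rel T) : Prop :=
  ~ has_induced e P5 /\ ~ has_induced e coP5.

(* b is mixed on X : b has a neighbour and a non-neighbour in X (b \notin X
   is imposed separately where needed). *)
Definition mixed (T : finType) (e : rel T) (b : T) (X : {set T}) : Prop :=
  (exists2 x, x \in X & e b x) /\ (exists2 y, y \in X & ~~ e b y).

(* G[A] is anticonnected: its complement is connected, i.e. any two vertices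
   of A are joined by a path of non-edges of G staying inside A. *)
Definition anticonnected (T : finType) (e : rel T) (A : {set T}) : Prop :=
  forall x y, x \in A -> y \in A ->
    connect (fun a b => [&& a \in A, b \in A, a != b & ~~ e a b]) x y.

(* Main.v *)
Require Import Defs.
From mathcomp Require Import all_boot.
Set Implicit Arguments. Unset Strict Implicit.

Section Mk.
Variables (T : finType) (e : rel T).
Hypothesis (sg : simple_graph e).

Lemma mk5 (H : rel 'I_5) (x0 x1 x2 x3 x4 : T) :
  let f := fun i : 'I_5 => nth x0 [:: x0; x1; x2; x3; x4] i in
  (forall i j : 'I_5, i != j -> e (f i) (f j) = H i j) ->
  (forall i j : 'I_5, i != j -> f i = f j -> False) ->
  (forall i, H i i = false) ->
  has_induced e H.
Proof.
move=> f He Hi HH; exists f; split.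
  move=> i j Hij; apply/eqP; apply/negPn/negP => Hn; exact: (Hi i j Hn Hij).
move=> i j; case: (eqVneq i j) => [->|Hn]; last exact: He.
have [_ irr] := sg; rewrite irr.
by rewrite HH.
Qed.

Lemma mkP5 x0 x1 x2 x3 x4 :
  e x0 x1 -> e x1 x2 -> e x2 x3 -> e x3 x4 ->
  ~~ e x0 x2 -> ~~ e x0 x3 -> ~~ e x0 x4 -> ~~ e x1 x3 -> ~~ e x1 x4 -> ~~ e x2 x4 ->
  has_induced e P5.
Proof.
have [sym irr] := sg.
move=> h01 h12 h23 h34 /negbTE h02 /negbTE h03 /negbTE h04 /negbTE h13 /negbTE h14 /negbTE h24.
have h10 := h01; rewrite sym in h10. have h21 := h12; rewrite sym in h21.
have h32 := h23; rewrite sym in h32. have h43 := h34; rewrite sym in h43.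
have h20 := h02; rewrite sym in h20. have h30 := h03; rewrite sym in h30.
have h40 := h04; rewrite sym in h40. have h31 := h13; rewrite sym in h31.
have h41 := h14; rewrite sym in h41. have h42 := h24; rewrite sym in h42.
have i0 := irr x0; have i1 := irr x1; have i2 := irr x2; have i3 := irr x3; have i4 := irr x4.
apply: (@mk5 _ x0 x1 x2 x3 x4).
  by move=> [[|[|[|[|[|i]]]]] Hi] // [[|[|[|[|[|j]]]]] Hj] //= _; congruence.
  by move=> [[|[|[|[|[|i]]]]] Hi] // [[|[|[|[|[|j]]]]] Hj] //= _ E; subst; congruence.
by move=> [[|[|[|[|[|i]]]]] Hi].
Qed.

Lemma mkcoP5 x0 x1 x2 x3 x4 :
  ~~ e x0 x1 -> ~~ e x1 x2 -> ~~ e x2 x3 -> ~~ e x3 x4 ->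
  e x0 x2 -> e x0 x3 -> e x0 x4 -> e x1 x3 -> e x1 x4 -> e x2 x4 ->
  has_induced e coP5.
Proof.
have [sym irr] := sg.
move=> /negbTE h01 /negbTE h12 /negbTE h23 /negbTE h34 h02 h03 h04 h13 h14 h24.
have h10 := h01; rewrite sym in h10. have h21 := h12; rewrite sym in h21.
have h32 := h23; rewrite sym in h32. have h43 := h34; rewrite sym in h43.
have h20 := h02; rewrite sym in h20. have h30 := h03; rewrite sym in h30.
have h40 := h04; rewrite sym in h40. have h31 := h13; rewrite sym in h31.
have h41 := h14; rewrite sym in h41. have h42 := h24; rewrite sym in h42.
have i0 := irr x0; have i1 := irr x1; have i2 := irr x2; have i3 := irr x3; have i4 := irr x4.
apply: (@mk5 _ x0 x1 x2 x3 x4).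
  by move=> [[|[|[|[|[|i]]]]] Hi] // [[|[|[|[|[|j]]]]] Hj] //= _; congruence.
  by move=> [[|[|[|[|[|i]]]]] Hi] // [[|[|[|[|[|j]]]]] Hj] //= _ E; subst; congruence.
by move=> [[|[|[|[|[|i]]]]] Hi].
Qed.
End Mk.

Lemma find_ab (T : finType) (e : rel T) (w : T) (A : {set T}) :
  anticonnected e A -> mixed e w A ->
  exists a b, [/\ a \in A, b \in A, ~~ e a b, e w a & ~~ e w b].
Proof.
move=> Ha [[x xA wx] [y yA wy]].
have /connectP [p Hp Ey] := Ha x y xA yA.
rewrite Ey {Ey y yA} in wy.
elim: p x xA wx Hp wy => [|c p IH] x xA wx /=; first by rewrite wx.
case/andP => /and4P [_ cA _ nxc] Hp wl.
case wc: (e w c); first exact: IH wc Hp wl.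
by exists x, c; rewrite wc.
Qed.

Lemma core (T : finType) (e : rel T) (u v w z a b : T) :
  simple_graph e -> P5_coP5_free e ->
  ~~ e u v -> ~~ e u w -> ~~ e v w ->
  e u a -> e v a -> e u b -> e v b -> ~~ e a b -> e w a -> ~~ e w b ->
  e w z -> e z u -> ~~ e z v -> False.
Proof.
move=> sg [nP nC] uv uw vw ua va ub vb ab wa wb wz zu zv.
have [sym _] := sg.
have vu : ~~ e v u by rewrite sym.
have wu : ~~ e w u by rewrite sym.
have wv : ~~ e w v by rewrite sym.
have au : e a u by rewrite sym.
have av : e a v by rewrite sym.
have bu : e b u by rewrite sym.
have bv : e b v by rewrite sym.
have ba : ~~ e b a by rewrite sym.
have aw : e a w by rewrite sym.
have bw : ~~ e b w by rewrite sym.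
have zw : e z w by rewrite sym.
have uz : e u z by rewrite sym.
have vz : ~~ e v z by rewrite sym.
case za: (e z a); case zb: (e z b).
- have az : e a z by rewrite sym.
  have bz : e b z by rewrite sym.
  by apply: nC; apply: (mkcoP5 sg (x0:=z) (x1:=v) (x2:=w) (x3:=b) (x4:=a)).
- have az : e a z by rewrite sym.
  have bz : ~~ e b z by rewrite sym zb.
  have zb' : ~~ e z b by rewrite zb.
  by apply: nC; apply: (mkcoP5 sg (x0:=u) (x1:=v) (x2:=z) (x3:=b) (x4:=a)).
- have az : ~~ e a z by rewrite sym za.
  have za' : ~~ e z a by rewrite za.
  have bz : e b z by rewrite sym.
  by apply: nC; apply: (mkcoP5 sg (x0:=u) (x1:=v) (x2:=z) (x3:=a) (x4:=b)).
- have bz : ~~ e b z by rewrite sym zb.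
  have zb' : ~~ e z b by rewrite zb.
  by apply: nP; apply: (mkP5 sg (x0:=v) (x1:=b) (x2:=u) (x3:=z) (x4:=w)).
Qed.

Theorem lemma2p6 (T : finType) (e : rel T) (u v w : T) (A : {set T}) :
  simple_graph e -> P5_coP5_free e ->
  u != v -> u != w -> v != w ->
  ~~ e u v -> ~~ e u w -> ~~ e v w ->
  A \subset [set x | e u x & e v x] ->
  anticonnected e A ->
  w \notin A -> mixed e w A ->
  forall z, e w z -> z \notin A -> z != u -> z != v ->
    ~ mixed e z [set u; v].
Proof.
move=> sg fr _ _ _ uv uw vw sA acA _ mA z wz _ _ _ [[x xS zx] [y yS zy]].
have [a [b [aA bA ab wa wb]]] := find_ab acA mA.
have /subsetP Hs := sA.
have /Hs := aA; rewrite inE => /andP [ua va].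
have /Hs := bA; rewrite inE => /andP [ub vb].
have [sym _] := sg.
move: xS yS; rewrite !inE => /orP [] /eqP Ex /orP [] /eqP Ey; subst.
- by rewrite zx in zy.
- exact: (core sg fr uv uw vw ua va ub vb ab wa wb wz zx zy).
- have vu : ~~ e v u by rewrite sym.
  exact: (core sg fr vu vw uw va ua vb ub ab wa wb wz zx zy).
- by rewrite zx in zy.
Qed.
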